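(* For a graph $G=(V,E)$ and $\tau\ge1$, let $Q_{\mathrm{LP\text{-}Del\text{-}N}}(G,\tau)$ be the optimal value of the linear program $$\max\ -\sum_{v\in V}x_v\quad\text{s.t.}\quad y_e\ge1-x_{v'}-x_{v''}\ \ \forall e=(v',v'')\in E,\qquad \sum_{e\in E(v)}y_e\le\tau\ \ \forall v\in V,\qquad x_v,y_e\in[0,1].$$ Then: (1) for fixed $G$, $Q_{\mathrm{LP\text{-}Del\text{-}N}}(G,\tau)$ is non-decreasing in $\tau$ and equals $0$ for $\tau\ge\deg(G)$; (2) for any node-neighboring graphs $G,G'$, $|Q_{\mathrm{LP\text{-}Del\text{-}N}}(G,\tau)-Q_{\mathrm{LP\text{-}Del\text{-}N}}(G',\tau)|\le1$; (3) for node-neighboring $G,G'$ with $G\subseteq G'$, $Q_{\mathrm{LP\text{-}Del\text{-}N}}(G,\tau)\ge Q_{\mathrm{LP\text{-}Del\text{-}N}}(G',\tau)$.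
   Context: Graphs are finite, simple, undirected; $E(v)$ is the set of edges incident to $v$ and $\deg(G)$ is the maximum degree. $G\subseteq G'$ means $G$ is obtained from $G'$ by deleting a set of nodes with all incident edges; $G,G'$ are node-neighboring if one is obtained from the other by deleting a single node with its incident edges. *)

(* Defs.v *)
From mathcomp Require Import all_boot all_order all_algebra.
From mathcomp Require Import classical_sets reals.
Set Implicit Arguments. Unset Strict Implicit. Unset Printing Implicit Defensive.
Import Order.TTheory GRing.Theory Num.Theory.
Local Open Scope ring_scope.

(* A finite simple graph is represented as the subgraph induced by a vertex
   set V : {set T} in a host graph given by a symmetric irreflexive relation
   e on a finite type T.  Deleting nodes (with incident edges) = shrinking V. *)

Definition edges (T : finType) (e : rel T) (V : {set T}) : {set {set T}} :=
  [set [set u; v] | u in V, v in V & e u v].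

(* deg(G): maximum degree (0 for the empty graph) *)
Definition max_deg (T : finType) (e : rel T) (V : {set T}) : nat :=
  \max_(v in V) #|[set u in V | e v u]|.

Definition LP_Del_N_feasible (R : realType) (T : finType) (e : rel T)
    (V : {set T}) (tau : R) (x : T -> R) (y : {set T} -> R) : Prop :=
  [/\ (forall u v, u \in V -> v \in V -> e u v -> 1 - x u - x v <= y [set u; v]),
      (forall v, v \in V -> \sum_(ed in edges e V | v \in ed) y ed <= tau),
      (forall v, v \in V -> 0 <= x v <= 1) &
      (forall ed, ed \in edges e V -> 0 <= y ed <= 1)].

Definition Q_LP_Del_N (R : realType) (T : finType) (e : rel T)
    (V : {set T}) (tau : R) : R :=
  sup [set r : R | exists x y, LP_Del_N_feasible e V tau x y /\
                               r = - \sum_(v in V) x v].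

Definition node_neighboring (T : finType) (V V' : {set T}) : Prop :=
  exists v, (v \notin V /\ V' = v |: V) \/ (v \notin V' /\ V = v |: V').

(* Main.v *)
Require Import Defs.
From mathcomp Require Import all_boot all_order all_algebra.
From mathcomp Require Import classical_sets reals.
From mathcomp Require Import lra.
Import Order.TTheory GRing.Theory Num.Theory.
Local Open Scope ring_scope.

Lemma edgesP (T : finType) (e : rel T) (V : {set T}) ed :
  reflect (exists u w, [/\ u \in V, w \in V, e u w & ed = [set u; w]])
          (ed \in edges e V).
Proof.
apply: (iffP imset2P).
- move=> [u w uV]; rewrite inE => /andP[wV euw] ->; by exists u, w.
- case=> u [w [uV wV euw edE]]; subst ed; apply: (@Imset2spec _ _ _ _ _ _ _ u w) => //; by rewrite inE wV.
Qed.

Definition SS (R : realType) (T : finType) (e : rel T) (V : {set T}) (tau : R) :=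
  (fun r : R => exists x y, LP_Del_N_feasible e V tau x y /\ r = - \sum_(v in V) x v) : set R.
Arguments SS {R T}.

Lemma SS_ub (R : realType) (T : finType) (e : rel T) (V : {set T}) (tau : R) :
  ubound (SS e V tau) 0.
Proof.
move=> r [x [y [[_ _ hx _] ->]]].
rewrite oppr_le0; apply: sumr_ge0 => v vV; by case/andP: (hx v vV).
Qed.

Lemma SS_ne (R : realType) (T : finType) (e : rel T) (V : {set T}) (tau : R) :
  1 <= tau -> SS e V tau (- \sum_(v in V) (1 : R)).
Proof.
move=> htau; exists (fun _ => 1), (fun _ => 0); split => //; split.
- by move=> *; rewrite !subrr sub0r lerN10.
- by move=> v _; rewrite big1 // (le_trans ler01 htau).
- by move=> *; rewrite lexx ler01.
- by move=> *; rewrite lexx ler01.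
Qed.

Lemma sup_cmp (R : realType) (A B : set R) (c : R) :
  (A !=set0)%classic -> has_ubound B ->
  (forall a, A a -> exists b, B b /\ a <= b + c) -> sup A <= sup B + c.
Proof.
move=> An Bu H; apply: ge_sup => // a /H [b [Bb ab]].
apply: (le_trans ab); rewrite lerD2r; exact: ub_le_sup.
Qed.
Lemma edge_mem (T : finType) (e : rel T) (V : {set T}) ed a :
  ed \in edges e V -> a \in ed -> a \in V.
Proof.
by case/edgesP=> u [w [uV wV _ ->]]; rewrite !inE => /orP[]/eqP->.
Qed.

Arguments edge_mem {T e V ed a}.
Lemma edges_sub (T : finType) (e : rel T) (V V' : {set T}) ed :
  V \subset V' -> ed \in edges e V -> ed \in edges e V'.
Proof.
move=> sVV' /edgesP [u [w [uV wV euw ->]]]; apply/edgesP; exists u, w.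
by rewrite (fintype.subsetP sVV' _ uV) (fintype.subsetP sVV' _ wV).
Qed.

Arguments edges_sub {T e V V' ed}.
Lemma edges_U1 (T : finType) (e : rel T) (V : {set T}) v ed :
  ed \in edges e (v |: V) -> v \notin ed -> ed \in edges e V.
Proof.
move=> /edgesP [u [w [uV wV euw ->]]]; rewrite !inE negb_or => /andP[vu vw].
move: uV wV; rewrite !inE eq_sym (negbTE vu) eq_sym (negbTE vw) /= => uV wV.
by apply/edgesP; exists u, w.
Qed.

Arguments edges_U1 {T e V v ed}.
Lemma deg_bound (T : finType) (e : rel T) (esym : symmetric e) (V : {set T}) w :
  w \in V -> (#|[set ed in edges e V | w \in ed]| <= max_deg e V)%N.
Proof.
move=> wV; apply: (@leq_trans #|[set u in V | e w u]|); last first.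
  by rewrite /max_deg; apply: (@leq_bigmax_cond _ (fun v => v \in V) (fun v => #|[set u in V | e v u]|)) .
apply: (@leq_trans #|(fun u => [set w; u]) @: [set u in V | e w u]|); last first.
  exact: leq_imset_card.
apply: subset_leq_card; apply/fintype.subsetP => ed; rewrite inE => /andP[].
case/edgesP=> a [b [aV bV eab ->]]; rewrite !inE => /orP[]/eqP wE; subst w.
  by apply/imsetP; exists b; rewrite // inE bV eab.
by apply/imsetP; exists a; [rewrite inE aV esym eab | rewrite finset.setUC].
Qed.

Lemma Q_sub (R : realType) (T : finType) (e : rel T) (V V' : {set T}) (tau : R) :
  1 <= tau -> V \subset V' -> Q_LP_Del_N e V' tau <= Q_LP_Del_N e V tau.
Proof.
move=> htau sVV'; rewrite -[X in _ <= X]addr0; apply: sup_cmp.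
- by eexists; apply: SS_ne.
- by exists 0; apply: SS_ub.
move=> a [x [y [[h1 h2 h3 h4] ->]]]; exists (- \sum_(v in V) x v); split.
  exists x, y; split => //; split.
  - by move=> u w uV wV; apply: h1; apply: (fintype.subsetP sVV').
  - move=> w wV; apply: le_trans (h2 w (fintype.subsetP sVV' _ wV)).
    rewrite big_mkcond [X in _ <= X]big_mkcond /=; apply: ler_sum => ed _.
    case E1: (ed \in edges e V) => /=.
      by rewrite (edges_sub sVV' E1).
    case: ifP => // /andP[E2 _]; by case/andP: (h4 ed E2).
  - by move=> v vV; apply: h3; apply: (fintype.subsetP sVV').
  - by move=> ed E; apply: h4; apply: (edges_sub sVV').
rewrite addr0 lerN2 big_mkcond [X in _ <= X]big_mkcond /=; apply: ler_sum => u _.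
case: ifP => uV; first by rewrite (fintype.subsetP sVV' _ uV).
by case: ifP => // uV'; case/andP: (h3 u uV').
Qed.
Lemma Q_add (R : realType) (T : finType) (e : rel T) (eirr : irreflexive e)
  (V : {set T}) v (tau : R) :
  1 <= tau -> v \notin V -> Q_LP_Del_N e V tau <= Q_LP_Del_N e (v |: V) tau + 1.
Proof.
move=> htau vV; apply: sup_cmp.
- by eexists; apply: SS_ne.
- by exists 0; apply: SS_ub.
move=> a [x [y [[h1 h2 h3 h4] ->]]].
have yge0 ed : ed \in edges e V -> 0 <= y ed by move/h4/andP=> [].
pose x' := fun u => if u == v then 1 else x u.
pose y' := fun ed : {set T} => if v \in ed then 0 else y ed.
exists (- \sum_(u in v |: V) x' u); split.
  exists x', y'; split => //; split.
  - move=> u w; rewrite !inE /x' /y' !inE.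
    have [->|uv] := eqVneq u v.
      move=> _ wV evw; have wv : w != v by apply: contraTneq evw => ->; rewrite eirr.
      rewrite (negbTE wv) /= in wV *.
      by rewrite subrr sub0r oppr_le0; case/andP: (h3 w wV).
    have [->|wv] := eqVneq w v.
      move=> uV _ _ /=; rewrite ?eqxx /= ?orbT.
      by rewrite addrAC subrr sub0r oppr_le0; case/andP: (h3 u uV).
    by move=> /= uV wV euw; apply: h1.
  - move=> w; rewrite inE; have [->|wv] := eqVneq w v => /= [_|wV].
      by rewrite big1 ?(le_trans ler01 htau) // => ed /andP[_ vin]; rewrite /y' vin.
    rewrite inE (negbTE wv) /= in wV; apply: le_trans (h2 w wV).
    rewrite big_mkcond [X in _ <= X]big_mkcond /=; apply: ler_sum => ed _.
    have H0 : 0 <= (if (ed \in edges e V) && (w \in ed) then y ed else 0).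
      by case: ifP => // /andP[E _]; apply: yge0.
    rewrite /y'; case: (boolP (v \in ed)) => vin; first by case: ifP.
    case: ifP => // /andP[E wE]; by rewrite (edges_U1 E vin) wE.
  - move=> u; rewrite /x' !inE; case: eqP => [_ _|_ /= uV]; first by rewrite lexx ler01.
    exact: h3.
  - move=> ed E; rewrite /y'; case: ifP => vin; first by rewrite lexx ler01.
    by apply: h4; apply: (edges_U1 E); rewrite vin.
rewrite big_setU1 //= /x' eqxx opprD addrAC addNr add0r.
rewrite [X in _ <= - X](eq_bigr x) //.
by move=> u uV; case: eqP => // uE; rewrite -uE uV in vV.
Qed.
Lemma sum1R (R : realType) (T : finType) (E : {set {set T}}) w :
  \sum_(ed in E | w \in ed) (1 : R) = (#|[set ed in E | w \in ed]|)%:R.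
Proof.
rewrite -sum1_card natr_sum; apply: eq_big => // ed; by rewrite inE.
Qed.

Theorem mainTheorem6 (R : realType) (T : finType) (e : rel T)
    (esym : symmetric e) (eirr : irreflexive e) :
  (* (1) monotone in tau, and zero once tau >= deg(G) *)
  (forall (V : {set T}) (tau1 tau2 : R), 1 <= tau1 -> tau1 <= tau2 ->
      Q_LP_Del_N e V tau1 <= Q_LP_Del_N e V tau2) /\
  (forall (V : {set T}) (tau : R), 1 <= tau -> (max_deg e V)%:R <= tau ->
      Q_LP_Del_N e V tau = 0) /\
  (* (2) sensitivity at most 1 under node-neighboring graphs *)
  (forall (V V' : {set T}) (tau : R), 1 <= tau -> node_neighboring V V' ->
      `|Q_LP_Del_N e V tau - Q_LP_Del_N e V' tau| <= 1) /\
  (* (3) monotone under deleting a node *)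
  (forall (V V' : {set T}) (tau : R), 1 <= tau -> node_neighboring V V' ->
      V \subset V' -> Q_LP_Del_N e V' tau <= Q_LP_Del_N e V tau).
Proof.
split; [|split; [|split]].
- move=> V t1 t2 h1 h12; rewrite -[X in _ <= X]addr0; apply: sup_cmp.
  + by eexists; apply: SS_ne.
  + by exists 0; apply: SS_ub.
  move=> a [x [y [[f1 f2 f3 f4] ->]]]; exists (- \sum_(v in V) x v); split; last by rewrite addr0.
  exists x, y; split => //; split => // w wV; exact: le_trans (f2 w wV) h12.
- move=> V tau htau hdeg; apply: le_anti; apply/andP; split.
    by apply: ge_sup; [eexists; apply: SS_ne | apply: SS_ub].
  apply: (ub_le_sup (E := SS e V tau)); first by exists 0; apply: SS_ub.
  exists (fun _ => 0), (fun _ => 1); split; last by rewrite big1 // oppr0.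
  split.
  + by move=> *; rewrite !subr0.
  + move=> w wV; rewrite sum1R; apply: le_trans hdeg.
    by rewrite ler_nat; apply: deg_bound.
  + by move=> *; rewrite lexx ler01.
  + by move=> *; rewrite lexx ler01.
- have key (V : {set T}) (v : T) (tau : R) : 1 <= tau -> v \notin V ->
      `|Q_LP_Del_N e V tau - Q_LP_Del_N e (v |: V) tau| <= 1.
    move=> htau vV; have h1 := @Q_add R T e eirr V v tau htau vV.
    have h2 := @Q_sub R T e V (v |: V) tau htau (finset.subsetUr [set v] V).
    rewrite ler_norml; apply/andP; split; lra.
  move=> V V' tau htau [v [[vV ->]|[vV' ->]]]; first exact: key.
  by rewrite distrC; apply: key.
- by move=> V V' tau htau _ sVV'; exact: (@Q_sub R T e V V' tau htau sVV').
Qed.
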